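(* For all $\mu=(s,r,\epsilon)$ (with $s\ge0$, $\epsilon\ge0$) sufficiently close to $\mu_0=(0,\pi/4,0)$, one has $\mathcal{W}^\parallel_\mu(t)>0$ and $\mathcal{W}^\perp_\mu(t)>0$ for all $t\ge0$.
   Context: Fix $\varphi\in C^\infty(\mathbb{R})$ with $0\le\varphi\le1$, $\varphi(x)=0$ for $x\le0$, $\varphi(x)=1$ for $x\ge1$, and let $H$ be the Heaviside function ($H(x)=1$ for $x>0$, $H(x)=0$ for $x\le0$). For $r>0$, $\epsilon\ge0$ with $r+\epsilon<\pi/2$ and $\rho\ge0$ set $K^\parallel_{r,\epsilon}(\rho)=1-2\varphi((\rho-r)/\epsilon)$ if $\epsilon>0$ and $K^\parallel_{r,0}(\rho)=1-2H(\rho-r)$. Let $\mathcal{A}_{r,\epsilon}$ solve $\mathcal{A}''+K^\parallel_{r,\epsilon}\mathcal{A}=0$, $\mathcal{A}(0)=0$, $\mathcal{A}'(0)=1$ (for $\epsilon=0$: the unique $C^1$ function with these initial values solving the equation on $\rho\ne r$). For $\mu=(s,r,\epsilon)$, $\rho_\mu(t)$ is, for $s>0$, the solution of $\rho''=\frac{\mathcal{A}_{r,\epsilon}'(\rho)}{\mathcal{A}_{r,\epsilon}(\rho)}(1-(\rho')^2)$, $\rho(0)=s$, $\rho'(0)=0$, and $\rho_{0,r,\epsilon}(t)=t$. $K^\perp_{r,\epsilon}=\mathcal{A}_{r,\epsilon}^{-2}(1-(\mathcal{A}_{r,\epsilon}')^2)$, $K_\mu(t)=\rho_\mu'(t)^2K^\parallel_{r,\epsilon}(\rho_\mu(t))+(1-\rho_\mu'(t)^2)K^\perp_{r,\epsilon}(\rho_\mu(t))$.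 The stable solutions $\mathcal{Y}^\parallel_\mu,\mathcal{Y}^\perp_\mu$ are the unique solutions on $[0,\infty)$ (weak, i.e. $C^1$ and solving the equation off $t=\ell_r(s):=\arccos(\cos r/\cos s)$, when $\epsilon=0$) of $\mathcal{Y}''+K^\parallel_{r,\epsilon}(\rho_\mu(t))\mathcal{Y}=0$, resp. $\mathcal{Y}''+K_\mu(t)\mathcal{Y}=0$, with $\lim_{t\to\infty}e^t\mathcal{Y}(t)=1$. For $\mu$ near $\mu_0$ one has $\mathcal{Y}^\parallel_\mu(0)>0$, $\mathcal{Y}^\perp_\mu(0)>0$, and $\mathcal{W}^\parallel_\mu=\mathcal{Y}^\parallel_\mu/\mathcal{Y}^\parallel_\mu(0)$, $\mathcal{W}^\perp_\mu=\mathcal{Y}^\perp_\mu/\mathcal{Y}^\perp_\mu(0)$. *)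

(* Defs.v *)
From Stdlib Require Import Reals Lra.
Open Scope R_scope.

Definition smooth (f : R -> R) : Prop :=
  exists D : nat -> R -> R, D O = f /\
    forall n x, derivable_pt_lim (D n) x (D (S n) x).

Definition Heaviside (x : R) : R := if Rlt_dec 0 x then 1 else 0.

Definition Kpar (phi : R -> R) (r eps rho : R) : R :=
  if Rlt_dec 0 eps then 1 - 2 * phi ((rho - r) / eps)
  else 1 - 2 * Heaviside (rho - r).

Definition is_A (phi : R -> R) (r eps : R) (A dA : R -> R) : Prop :=
  A 0 = 0 /\ dA 0 = 1 /\
  (forall x, derivable_pt_lim A x (dA x)) /\
  (forall x, continuity_pt dA x) /\
  (forall x, (0 < eps \/ x <> r) ->
     derivable_pt_lim dA x (- Kpar phi r eps x * A x)).

Definition is_rho (A dA : R -> R) (s : R) (rho drho : R -> R) : Prop :=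
  (s = 0 -> forall t, rho t = t /\ drho t = 1) /\
  (0 < s ->
     rho 0 = s /\ drho 0 = 0 /\
     forall t, derivable_pt_lim rho t (drho t) /\
       derivable_pt_lim drho t (dA (rho t) / A (rho t) * (1 - (drho t) ^ 2))).

Definition Kperp (A dA : R -> R) (rho : R) : R :=
  (1 - (dA rho) ^ 2) / (A rho) ^ 2.

Definition Kmu (phi : R -> R) (r eps : R) (A dA rho drho : R -> R) (t : R) : R :=
  (drho t) ^ 2 * Kpar phi r eps (rho t)
  + (1 - (drho t) ^ 2) * Kperp A dA (rho t).

Definition ell (r s : R) : R := acos (cos r / cos s).

(* Stable solution on [0,oo) of Y'' + K Y = 0 (weak, i.e. C^1 and solving the
   equation off t = ell r s, when eps = 0), with lim_{t->oo} e^t Y(t) = 1. *)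
Definition is_stable (eps r s : R) (K : R -> R) (Y dY : R -> R) : Prop :=
  (forall e, 0 < e -> exists d, 0 < d /\
      forall t, 0 <= t < d -> Rabs (Y t - Y 0) < e) /\
  (forall t, 0 < t -> derivable_pt_lim Y t (dY t)) /\
  (forall t, 0 < t -> continuity_pt dY t) /\
  (forall t, 0 < t -> (0 < eps \/ t <> ell r s) ->
     derivable_pt_lim dY t (- K t * Y t)) /\
  (forall e, 0 < e -> exists T, forall t, T <= t ->
     Rabs (exp t * Y t - 1) < e).

Definition Wnorm (Y : R -> R) (t : R) : R := Y t / Y 0.

(* Main.v *)
Require Import Defs.
From Stdlib Require Import Reals Lra.
Open Scope R_scope.

Lemma mono0 (f df : R -> R) a b :
  a <= b -> (forall x, a <= x <= b -> continuity_pt f x) ->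
  (forall x, a < x < b -> derivable_pt_lim f x (df x) /\ 0 <= df x) ->
  f a <= f b.
Proof.
  intros Hab Hc Hd.
  destruct (Req_dec a b) as [->|Hne]; [lra|].
  assert (Hlt : a < b) by lra.
  set (pr1 := fun c (P : a < c < b) => exist (fun l => derivable_pt_lim f c l) (df c) (proj1 (Hd c P))).
  destruct (MVT f id a b pr1 (fun c _ => derivable_pt_id c) Hlt Hc
     (fun c _ => derivable_continuous_pt id c (derivable_pt_id c))) as [c [P HP]].
  rewrite derive_pt_id in HP. simpl in HP. unfold id in HP.
  destruct (Hd c P) as [_ H0].
  assert (0 <= (b - a) * df c) by (apply Rmult_le_pos; lra).
  lra.
Qed.

Lemma mono (f df : R -> R) a b p :
  a <= b -> (forall x, a <= x <= b -> continuity_pt f x) ->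
  (forall x, a < x < b -> x <> p -> derivable_pt_lim f x (df x) /\ 0 <= df x) ->
  f a <= f b.
Proof.
  intros Hab Hc Hd.
  destruct (Rlt_dec a p) as [Hap|Hap]; [destruct (Rlt_dec p b) as [Hpb|Hpb]|].
  - apply Rle_trans with (f p).
    + apply (mono0 f df); [lra| intros; apply Hc; lra | intros; apply Hd; lra].
    + apply (mono0 f df); [lra| intros; apply Hc; lra | intros; apply Hd; lra].
  - apply (mono0 f df); [lra| intros; apply Hc; lra | intros; apply Hd; lra].
  - apply (mono0 f df); [lra| intros; apply Hc; lra | intros; apply Hd; lra].
Qed.

Lemma back_ind (f : R -> R) a b :
  a <= b -> (forall x, a <= x <= b -> continuity_pt f x) -> 0 < f b ->
  (forall c, a <= c < b -> (forall x, c < x <= b -> 0 < f x) -> 0 < f c) ->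
  forall x, a <= x <= b -> 0 < f x.
Proof.
  intros Hab Hc Hb Hstep x0 Hx0.
  destruct (Rlt_or_le 0 (f x0)) as [|Hneg]; [assumption|exfalso].
  set (Z := fun x => a <= x <= b /\ f x <= 0).
  assert (Hbd : bound Z) by (exists b; intros y [Hy _]; lra).
  assert (Hne : exists x, Z x) by (exists x0; split; assumption).
  destruct (completeness Z Hbd Hne) as [m [Hub Hlub]].
  assert (Hm1 : x0 <= m) by (apply Hub; split; assumption).
  assert (Hm2 : m <= b) by (apply Hlub; intros y [Hy _]; lra).
  assert (Hpos : forall x, m < x <= b -> 0 < f x).
  { intros x Hx. destruct (Rlt_or_le 0 (f x)) as [|Hf]; [assumption|].
    assert (x <= m) by (apply Hub; split; [lra|assumption]). lra. }
  assert (Hfm : f m <= 0).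
  { destruct (Rlt_or_le 0 (f m)) as [Hfm|]; [|assumption].
    destruct (Hc m ltac:(lra) (f m) Hfm) as [d [Hd Hd2]].
    assert (Hub2 : is_upper_bound Z (m - d/2)).
    { intros y [Hy Hfy]. destruct (Rle_or_lt y (m - d/2)) as [|Hy2]; [assumption|].
      exfalso. destruct (Req_dec y m) as [->|Hym]; [lra|].
      assert (y <= m) by (apply Hub; split; assumption).
      assert (Hdist : Rabs (f y - f m) < f m).
      { apply Hd2. split. split; [exact I| auto].
        simpl. unfold R_dist. rewrite Rabs_left by lra. lra. }
      apply Rabs_def2 in Hdist. lra. }
    specialize (Hlub _ Hub2). lra. }
  destruct (Req_dec m b) as [->|Hmb]; [lra|].
  assert (0 < f m) by (apply Hstep; [lra| exact Hpos]). lra.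
Qed.

Lemma fwd_ind (f : R -> R) a b :
  a <= b -> (forall x, a <= x <= b -> continuity_pt f x) -> 0 < f a ->
  (forall c, a < c <= b -> (forall x, a <= x < c -> 0 < f x) -> 0 < f c) ->
  forall x, a <= x <= b -> 0 < f x.
Proof.
  intros Hab Hc Ha Hstep x Hx.
  set (g := fun y => f (- y)).
  assert (H : forall y, -b <= y <= -a -> 0 < g y).
  { apply back_ind.
    - lra.
    - intros y Hy. unfold g.
      apply (continuity_pt_comp Ropp f). apply continuity_pt_opp, derivable_continuous_pt, derivable_pt_id.
      apply Hc. lra.
    - unfold g. rewrite Ropp_involutive. assumption.
    - intros c Hc1 Hc2. unfold g. apply Hstep. lra.
      intros y Hy. replace y with (- - y) by ring. apply Hc2. lra. }
  replace x with (- - x) by ring. apply H. lra.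
Qed.

Lemma dl_eq f x l l' : derivable_pt_lim f x l -> l = l' -> derivable_pt_lim f x l'.
Proof. intros H ->; exact H. Qed.
Lemma dmul f g x a b : derivable_pt_lim f x a -> derivable_pt_lim g x b ->
  derivable_pt_lim (fun y => f y * g y) x (a * g x + f x * b).
Proof. intros; apply (derivable_pt_lim_mult f g); assumption. Qed.
Lemma dadd f g x a b : derivable_pt_lim f x a -> derivable_pt_lim g x b ->
  derivable_pt_lim (fun y => f y + g y) x (a + b).
Proof. intros; apply (derivable_pt_lim_plus f g); assumption. Qed.
Lemma dsub f g x a b : derivable_pt_lim f x a -> derivable_pt_lim g x b ->
  derivable_pt_lim (fun y => f y - g y) x (a - b).
Proof. intros; apply (derivable_pt_lim_minus f g); assumption. Qed.
Lemma dopp f x a : derivable_pt_lim f x a ->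
  derivable_pt_lim (fun y => - f y) x (- a).
Proof. intros; apply (derivable_pt_lim_opp f); assumption. Qed.
Lemma ddiv f g x a b : derivable_pt_lim f x a -> derivable_pt_lim g x b -> g x <> 0 ->
  derivable_pt_lim (fun y => f y / g y) x ((a * g x - b * f x) / (g x)²).
Proof. intros; apply (derivable_pt_lim_div f g); assumption. Qed.
Lemma dcomp f g x a b : derivable_pt_lim g x a -> derivable_pt_lim f (g x) b ->
  derivable_pt_lim (fun y => f (g y)) x (b * a).
Proof. intros; apply (derivable_pt_lim_comp g f); assumption. Qed.
Lemma dconst c x : derivable_pt_lim (fun _ => c) x 0.
Proof. apply (derivable_pt_lim_const c). Qed.
Lemma did x : derivable_pt_lim (fun y => y) x 1.
Proof. apply derivable_pt_lim_id. Qed.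
Lemma dshift_cos T x : derivable_pt_lim (fun y => cos (y - T)) x (- sin (x - T)).
Proof. eapply dl_eq. apply (dcomp cos (fun y => y - T)).
  apply dsub; [apply did|apply dconst]. apply derivable_pt_lim_cos. ring. Qed.
Lemma dshift_sin T x : derivable_pt_lim (fun y => sin (y - T)) x (cos (x - T)).
Proof. eapply dl_eq. apply (dcomp sin (fun y => y - T)).
  apply dsub; [apply did|apply dconst]. apply derivable_pt_lim_sin. ring. Qed.
Lemma dcont f x l : derivable_pt_lim f x l -> continuity_pt f x.
Proof. intro H. apply derivable_continuous_pt. exists l; exact H. Qed.

Lemma sturm (K Y dY : R -> R) p T :
  0 < T < PI/2 ->
  (forall e, 0 < e -> exists d, 0 < d /\ forall t, 0 <= t < d -> Rabs (Y t - Y 0) < e) ->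
  (forall t, 0 < t -> derivable_pt_lim Y t (dY t)) ->
  (forall t, 0 < t -> continuity_pt dY t) ->
  (forall t, 0 < t -> t <> p -> derivable_pt_lim dY t (- K t * Y t)) ->
  (forall e, 0 < e -> exists T, forall t, T <= t -> Rabs (exp t * Y t - 1) < e) ->
  (forall t, 0 < t < T -> K t <= 1) -> (forall t, T <= t -> K t <= 0) ->
  forall t, 0 <= t -> 0 < Y t.
Proof.
  intros HT H0 HY HdYc HdY Hdec HK1 HK0.
  assert (HYc : forall t, 0 < t -> continuity_pt Y t) by (intros t Ht; eapply dcont; apply HY; exact Ht).
  destruct (Hdec (1/2) ltac:(lra)) as [T0 HT0].
  set (T2 := Rmax T T0).
  assert (HT2a : T <= T2) by apply Rmax_l.
  assert (HT2b : T0 <= T2) by apply Rmax_r.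
  assert (Hpos2 : forall t, T2 <= t -> 0 < Y t).
  { intros t Ht. specialize (HT0 t ltac:(lra)). apply Rabs_def2 in HT0.
    assert (0 < exp t * Y t) by lra.
    pose proof (exp_pos t).
    destruct (Rlt_or_le 0 (Y t)) as [|Hn]; [assumption|].
    assert (exp t * Y t <= 0). { rewrite <- (Rmult_0_r (exp t)). apply Rmult_le_compat_l; lra. }
    lra. }
  assert (HdYmono : forall a b, T <= a <= b -> (forall x, a < x < b -> 0 < Y x) -> dY a <= dY b).
  { intros a b Hab Hpos.
    apply (mono dY (fun x => - K x * Y x) a b p); [lra| intros; apply HdYc; lra|].
    intros x Hx Hxp. split. apply HdY; [lra|assumption].
    specialize (HK0 x ltac:(lra)). specialize (Hpos x Hx). nra. }
  assert (HdT2 : dY T2 < 0).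
  { destruct (Rlt_or_le (dY T2) 0) as [|Hge]; [assumption|exfalso].
    assert (Hge2 : forall x, T2 <= x -> Y T2 <= Y x).
    { intros x Hx. apply (mono Y dY T2 x p); [lra| intros; apply HYc; lra|].
      intros y Hy _. split. apply HY; lra.
      apply Rle_trans with (dY T2); [assumption|].
      apply HdYmono; [lra|]. intros z Hz. apply Hpos2; lra. }
    pose proof (Hpos2 T2 ltac:(lra)) as HY2.
    set (x := Rmax T2 (3 / (2 * Y T2))) in *.
    assert (Hx1 : T2 <= x) by apply Rmax_l.
    assert (Hx2 : 3 / (2 * Y T2) <= x) by apply Rmax_r.
    specialize (HT0 x ltac:(lra)). apply Rabs_def2 in HT0.
    specialize (Hge2 x Hx1).
    assert (Hex : 1 + x < exp x) by (apply exp_ineq1; lra).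
    assert (Hq : 3 / 2 < exp x * Y T2).
    { apply Rlt_le_trans with (x * Y T2 + Y T2 * 1).
      - assert (3/2 <= x * Y T2).
        { apply Rle_trans with (3 / (2 * Y T2) * Y T2).
          right. field. lra. apply Rmult_le_compat_r; lra. }
        lra.
      - nra. }
    assert (exp x * Y T2 <= exp x * Y x) by (apply Rmult_le_compat_l; [left; apply exp_pos|assumption]).
    lra. }
  assert (HposT : forall t, T <= t <= T2 -> 0 < Y t).
  { apply back_ind; [lra| intros; apply HYc; lra| apply Hpos2; lra|].
    intros c Hc Hposc.
    assert (Hd : forall x, c <= x <= T2 -> dY x < 0).
    { intros x Hx. apply Rle_lt_trans with (dY T2); [|assumption].
      apply HdYmono; [lra|]. intros z Hz. apply Hposc; lra. }
    assert (- Y c <= - Y T2).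
    { apply (mono (fun x => - Y x) (fun x => - dY x) c T2 p); [lra| |].
      intros x Hx. apply continuity_pt_opp. apply HYc; lra.
      intros x Hx _. split. apply dopp, HY; lra. pose proof (Hd x ltac:(lra)); lra. }
    pose proof (Hpos2 T2 ltac:(lra)). lra. }
  assert (HdT : dY T < 0).
  { apply Rle_lt_trans with (dY T2); [|assumption].
    apply HdYmono; [lra|]. intros z Hz. apply HposT; lra. }
  assert (HYT : 0 < Y T) by (apply HposT; lra).
  assert (Hcmp : forall c, 0 < c <= T -> (forall x, c < x <= T -> 0 < Y x) ->
                 Y T * cos (c - T) <= Y c).
  { intros c Hc Hposc.
    destruct (Req_dec c T) as [->|HcT]; [rewrite Rminus_diag, cos_0; lra|].
    assert (Hu : forall x, c <= x <= T -> 0 < cos (x - T)).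
    { intros x Hx. apply cos_gt_0; lra. }
    set (W := fun x => dY x * cos (x - T) + Y x * sin (x - T)).
    assert (HW : forall x, c <= x <= T -> W x <= W T).
    { intros x Hx. apply (mono W (fun y => (1 - K y) * Y y * cos (y - T)) x T p); [lra| |].
      - intros y Hy. unfold W. apply continuity_pt_plus; apply continuity_pt_mult.
        apply HdYc; lra. apply (dcont _ _ _ (dshift_cos T y)).
        apply HYc; lra. apply (dcont _ _ _ (dshift_sin T y)).
      - intros y Hy Hyp. split.
        + unfold W. eapply dl_eq. apply dadd; apply dmul.
          apply HdY; [lra|exact Hyp]. apply dshift_cos. apply HY; lra. apply dshift_sin. cbv beta; ring.
        + specialize (HK1 y ltac:(lra)). specialize (Hposc y ltac:(lra)). specialize (Hu y ltac:(lra)).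
          apply Rmult_le_pos; [|lra]. nra. }
    assert (HWT : W T = dY T) by (unfold W; replace (T - T) with 0 by ring; rewrite cos_0, sin_0; ring).
    assert (Hg : - (Y c / cos (c - T)) <= - (Y T / cos (T - T))).
    { apply (mono (fun x => - (Y x / cos (x - T))) (fun x => - (W x / (cos (x - T))²)) c T p); [lra| |].
      - intros y Hy. apply continuity_pt_opp. apply continuity_pt_div.
        apply HYc; lra. apply (dcont _ _ _ (dshift_cos T y)). pose proof (Hu y Hy); lra.
      - intros y Hy _. pose proof (Hu y ltac:(lra)) as Huy. split.
        + apply dopp. eapply dl_eq. apply ddiv. apply HY; lra. apply dshift_cos. lra.
          unfold W. cbv beta. field. unfold Rsqr; apply Rgt_not_eq; apply Rmult_lt_0_compat; lra.
        + pose proof (HW y ltac:(lra)).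
          assert (W y / (cos (y - T))² < 0).
          { apply Rdiv_neg_pos. lra. unfold Rsqr; nra. }
          lra. }
    rewrite Rminus_diag, cos_0 in Hg.
    assert (Hcc := Hu c ltac:(lra)).
    assert (Y T <= Y c / cos (c - T)) by lra.
    apply Rmult_le_reg_r with (/ cos (c - T)). apply Rinv_0_lt_compat; lra.
    replace (Y T * cos (c - T) * / cos (c - T)) with (Y T) by (field; lra).
    exact H. }
  assert (Hcos : forall c, 0 <= c <= T -> cos T <= cos (c - T)).
  { intros c Hc. replace (cos (c - T)) with (cos (T - c)) by (rewrite <- cos_neg; f_equal; ring).
    destruct (Req_dec c 0) as [->|Hc0]. rewrite Rminus_0_r; lra.
    left. apply cos_decreasing_1; lra. }
  assert (HcT : 0 < cos T) by (apply cos_gt_0; lra).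
  assert (Hsmall : forall t, 0 < t <= T -> 0 < Y t).
  { intros t Ht. apply (back_ind Y t T); [lra| intros; apply HYc; lra| assumption| |lra].
    intros c Hc Hposc. pose proof (Hcmp c ltac:(lra) Hposc). pose proof (Hcos c ltac:(lra)).
    assert (0 < Y T * cos (c - T)) by (apply Rmult_lt_0_compat; lra). lra. }
  assert (Hbnd : forall t, 0 < t <= T -> Y T * cos T <= Y t).
  { intros t Ht. pose proof (Hcmp t Ht ltac:(intros; apply Hsmall; lra)).
    pose proof (Hcos t ltac:(lra)). nra. }
  intros t Ht.
  destruct (Rlt_or_le T t) as [HtT|HtT].
  - destruct (Rle_or_lt t T2); [apply HposT; lra| apply Hpos2; lra].
  - destruct (Req_dec t 0) as [->|Ht0]; [|apply Hsmall; lra].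
    assert (Hm : 0 < Y T * cos T) by (apply Rmult_lt_0_compat; lra).
    destruct (Rlt_or_le 0 (Y 0)) as [|Hn]; [assumption|exfalso].
    destruct (H0 (Y T * cos T - Y 0) ltac:(lra)) as [d [Hd Hd2]].
    set (t1 := Rmin (d/2) T).
    assert (0 < t1) by (apply Rmin_glb_lt; lra).
    assert (t1 <= d/2) by apply Rmin_l. assert (t1 <= T) by apply Rmin_r.
    specialize (Hd2 t1 ltac:(lra)). apply Rabs_def2 in Hd2.
    pose proof (Hbnd t1 ltac:(lra)). lra.
Qed.

Lemma Kpar_le1 phi r eps x : (forall x, 0 <= phi x <= 1) -> Kpar phi r eps x <= 1.
Proof. intros Hr. unfold Kpar, Heaviside. destruct (Rlt_dec 0 eps).
  specialize (Hr ((x - r)/eps)); lra. destruct (Rlt_dec 0 (x - r)); lra. Qed.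

Lemma Kpar_1 phi r eps x : (forall x, x <= 0 -> phi x = 0) -> 0 <= eps -> x <= r ->
  Kpar phi r eps x = 1.
Proof. intros Hl He Hx. unfold Kpar, Heaviside. destruct (Rlt_dec 0 eps).
  rewrite Hl. ring. apply Rmult_le_reg_r with eps; [lra|]. unfold Rdiv.
  rewrite Rmult_assoc, Rinv_l by lra. lra.
  destruct (Rlt_dec 0 (x - r)); lra. Qed.

Lemma Kpar_m1 phi r eps x : (forall x, 1 <= x -> phi x = 1) -> 0 <= eps -> r + eps < x ->
  Kpar phi r eps x = -1.
Proof. intros Hl He Hx. unfold Kpar, Heaviside. destruct (Rlt_dec 0 eps).
  rewrite Hl. ring. apply Rmult_le_reg_r with eps; [lra|]. unfold Rdiv.
  rewrite Rmult_assoc, Rinv_l by lra. lra.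
  destruct (Rlt_dec 0 (x - r)); lra. Qed.

Lemma A_facts phi r eps A dA :
  (forall x, 0 <= phi x <= 1) -> (forall x, x <= 0 -> phi x = 0) ->
  (forall x, 1 <= x -> phi x = 1) ->
  0 < r -> 0 <= eps -> r + eps < 1 ->
  is_A phi r eps A dA ->
  (forall x, 0 <= x <= r -> A x = sin x /\ dA x = cos x) /\
  (forall x, 0 < x -> 0 < A x /\ 0 < dA x) /\
  (forall x, 0 <= x -> 1 <= A x ^ 2 + dA x ^ 2) /\
  (forall x y, 0 <= x <= y -> A x <= A y).
Proof.
  intros Hr Hl Hrt Hr0 He Hre [HA0 [HdA0 [HdA [HdAc HddA]]]].
  pose proof PI2_3_2 as Hpi.
  assert (HAc : forall x, continuity_pt A x) by (intro x; eapply dcont; apply HdA).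
  assert (Hdd : forall x, x <> r -> derivable_pt_lim dA x (- Kpar phi r eps x * A x)).
  { intros x Hx; apply HddA; right; exact Hx. }
  assert (Ha : forall x, 0 <= x <= r -> A x = sin x /\ dA x = cos x).
  { intros x Hx.
    set (E := fun y => (A y - sin y) * (A y - sin y) + (dA y - cos y) * (dA y - cos y)).
    assert (HEc : forall y, continuity_pt E y).
    { intro y. unfold E. apply continuity_pt_plus; apply continuity_pt_mult;
        apply continuity_pt_minus; auto; apply derivable_continuous_pt;
        first [apply derivable_pt_sin | apply derivable_pt_cos]. }
    assert (HEd : forall y, 0 < y < x -> y <> r -> derivable_pt_lim E y 0).
    { intros y Hy Hyr. unfold E. eapply dl_eq.
      apply dadd; apply dmul; apply dsub; try apply HdA; try apply Hdd; try exact Hyr;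
        try apply derivable_pt_lim_sin; try apply derivable_pt_lim_cos.
      rewrite (Kpar_1 phi r eps y Hl He ltac:(lra)). cbv beta. ring. }
    assert (E 0 <= E x).
    { apply (mono E (fun _ => 0) 0 x r); [lra| intros; apply HEc|].
      intros y Hy Hyr. split; [apply HEd; [lra|exact Hyr]|lra]. }
    assert (- E 0 <= - E x).
    { apply (mono (fun y => - E y) (fun _ => - 0) 0 x r); [lra| intros; apply continuity_pt_opp, HEc|].
      intros y Hy Hyr. split; [apply dopp, HEd; [lra|exact Hyr]|lra]. }
    assert (HE0 : E 0 = 0) by (unfold E; rewrite HA0, HdA0, sin_0, cos_0; ring).
    unfold E in *.
    assert (Hs : (A x - sin x) * (A x - sin x) + (dA x - cos x) * (dA x - cos x) = 0) by lra.
    pose proof (Rle_0_sqr (A x - sin x)). pose proof (Rle_0_sqr (dA x - cos x)). unfold Rsqr in *.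
    assert (Hq1 : (A x - sin x) * (A x - sin x) = 0) by lra.
    assert (Hq2 : (dA x - cos x) * (dA x - cos x) = 0) by lra.
    apply Rmult_integral in Hq1; apply Rmult_integral in Hq2. split; lra. }
  assert (Hsr : 0 < sin r) by (apply sin_gt_0; lra).
  assert (W1neg : forall x, 0 <= x <= 6/5 -> (forall y, 0 < y < x -> 0 <= A y) ->
                  A x * cos x - dA x * sin x <= 0).
  { intros x Hx HAy.
    set (W := fun y => A y * cos y - dA y * sin y).
    assert (- W 0 <= - W x).
    { apply (mono (fun y => - W y) (fun y => (1 - Kpar phi r eps y) * A y * sin y) 0 x r); [lra| |].
      - intros y _. unfold W. apply continuity_pt_opp, continuity_pt_minus; apply continuity_pt_mult;
          auto; apply derivable_continuous_pt; first [apply derivable_pt_sin | apply derivable_pt_cos].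
      - intros y Hy Hyr. split.
        + unfold W. eapply dl_eq. apply dopp, dsub; apply dmul; try apply HdA; try apply Hdd;
            try exact Hyr; try apply derivable_pt_lim_sin; try apply derivable_pt_lim_cos.
          cbv beta. ring.
        + pose proof (Kpar_le1 phi r eps y Hr). pose proof (HAy y Hy).
          assert (0 < sin y) by (apply sin_gt_0; lra).
          apply Rmult_le_pos; [|lra]. apply Rmult_le_pos; lra. }
    unfold W in *. rewrite HA0, sin_0 in *. lra. }
  assert (HApos : forall x, r <= x <= 6/5 -> 0 < A x).
  { apply fwd_ind; [lra| intros; auto| destruct (Ha r ltac:(lra)) as [-> _]; exact Hsr|].
    intros c Hc Hposc.
    assert (HA0c : forall y, 0 < y < c -> 0 <= A y).
    { intros y Hy. destruct (Rle_or_lt y r).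
      destruct (Ha y ltac:(lra)) as [-> _]. left; apply sin_gt_0; lra.
      left; apply Hposc; lra. }
    assert (A r <= A c).
    { apply (mono A dA r c r); [lra| intros; auto|].
      intros y Hy _. split; [apply HdA|].
      pose proof (W1neg y ltac:(lra) ltac:(intros; apply HA0c; lra)).
      assert (0 < sin y) by (apply sin_gt_0; lra).
      assert (0 < cos y) by (apply cos_gt_0; lra).
      pose proof (Hposc y ltac:(lra)).
      assert (0 <= A y * cos y) by (apply Rmult_le_pos; lra).
      destruct (Rle_or_lt 0 (dA y)) as [|Hn]; [assumption|].
      assert (dA y * sin y < 0) by nra.
      lra. }
    destruct (Ha r ltac:(lra)) as [Hr' _]. lra. }
  assert (HA0pos : forall y, 0 < y <= 6/5 -> 0 < A y).
  { intros y Hy. destruct (Rle_or_lt y r).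
    destruct (Ha y ltac:(lra)) as [-> _]. apply sin_gt_0; lra. apply HApos; lra. }
  assert (HdApos : forall x, 0 < x <= 6/5 -> 0 < dA x).
  { intros x Hx. pose proof (W1neg x ltac:(lra) ltac:(intros; left; apply HA0pos; lra)).
    assert (0 < sin x) by (apply sin_gt_0; lra).
    assert (0 < cos x) by (apply cos_gt_0; lra).
    pose proof (HA0pos x Hx).
    assert (0 < A x * cos x) by (apply Rmult_lt_0_compat; lra).
    destruct (Rlt_or_le 0 (dA x)) as [|Hn]; [assumption|].
    assert (dA x * sin x <= 0) by nra. lra. }
  assert (Hdd1 : forall x, 1 < x -> derivable_pt_lim dA x (A x)).
  { intros x Hx. eapply dl_eq. apply Hdd. lra.
    rewrite (Kpar_m1 phi r eps x Hrt He ltac:(lra)). ring. }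
  assert (Hconst : forall (f df : R -> R), (forall x, continuity_pt f x) ->
     (forall x, 1 < x -> derivable_pt_lim f x 0) -> forall x, 1 <= x -> f x = f 1).
  { intros f df Hfc Hfd x Hx.
    assert (f 1 <= f x).
    { apply (mono f (fun _ => 0) 1 x 0); [lra|auto|]. intros y Hy _. split; [apply Hfd; lra|lra]. }
    assert (- f 1 <= - f x).
    { apply (mono (fun y => - f y) (fun _ => - 0) 1 x 0); [lra|intros; apply continuity_pt_opp; auto|].
      intros y Hy _. split; [apply dopp, Hfd; lra|lra]. }
    lra. }
  assert (Hexpc : forall y, continuity_pt exp y) by (intro; apply derivable_continuous_pt, derivable_pt_exp).
  assert (HS : forall x, 1 <= x -> (A x + dA x) * exp (- x) = (A 1 + dA 1) * exp (- 1)).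
  { intros x Hx. apply (Hconst (fun y => (A y + dA y) * exp (- y)) (fun _ => 0)); [| |lra].
    - intro y. apply continuity_pt_mult. apply continuity_pt_plus; auto.
      apply (continuity_pt_comp Ropp exp). apply continuity_pt_opp, derivable_continuous_pt, derivable_pt_id. auto.
    - intros y Hy. eapply dl_eq. apply dmul. apply dadd. apply HdA. apply Hdd1; lra.
      apply (dcomp exp Ropp). apply dopp, did. apply derivable_pt_lim_exp. cbv beta. ring. }
  assert (HD : forall x, 1 <= x -> (dA x - A x) * exp x = (dA 1 - A 1) * exp 1).
  { intros x Hx. apply (Hconst (fun y => (dA y - A y) * exp y) (fun _ => 0)); [| |lra].
    - intro y. apply continuity_pt_mult. apply continuity_pt_minus; auto. auto.
    - intros y Hy. eapply dl_eq. apply dmul. apply dsub. apply Hdd1; lra. apply HdA.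
      apply derivable_pt_lim_exp. cbv beta. ring. }
  assert (Hbig : forall x, 1 <= x -> 0 < A x /\ 0 < dA x).
  { intros x Hx.
    pose proof (HA0pos 1 ltac:(lra)). pose proof (HdApos 1 ltac:(lra)).
    assert (He1 : exp (x - 1) >= 1).
    { destruct (Req_dec x 1) as [->|]. rewrite Rminus_diag, exp_0. lra.
      left. pose proof (exp_ineq1 (x-1) ltac:(lra)). lra. }
    assert (E1 : exp (- x) * exp (x - 1) = exp (- 1)) by (rewrite <- exp_plus; f_equal; ring).
    assert (E3 : exp (x - 1) = exp x * exp (- 1)) by (rewrite <- exp_plus; f_equal; ring).
    assert (E4 : exp 1 * exp (- 1) = 1) by (rewrite <- exp_plus; replace (1 + - 1) with 0 by ring; apply exp_0).
    assert (HS' : A x + dA x = (A 1 + dA 1) * exp (x - 1)).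
    { pose proof (HS x Hx) as HSx.
      apply Rmult_eq_reg_r with (exp (- x)). 2: apply Rgt_not_eq, exp_pos.
      rewrite HSx, <- E1. ring. }
    assert (HD' : (dA x - A x) * exp (x - 1) = (dA 1 - A 1)).
    { rewrite E3, <- Rmult_assoc, (HD x Hx), Rmult_assoc, E4. ring. }
    assert (Hb : Rabs (dA x - A x) < A x + dA x).
    { rewrite HS'. apply Rle_lt_trans with (Rabs (dA 1 - A 1)).
      - rewrite <- HD'. rewrite Rabs_mult, (Rabs_right (exp (x-1))) by lra.
        rewrite <- (Rmult_1_r (Rabs (dA x - A x))) at 1.
        apply Rmult_le_compat_l; [apply Rabs_pos|lra].
      - apply Rlt_le_trans with (A 1 + dA 1). apply Rabs_def1; lra. nra. }
    apply Rabs_def2 in Hb. lra. }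
  assert (Hpos : forall x, 0 < x -> 0 < A x /\ 0 < dA x).
  { intros x Hx. destruct (Rle_or_lt x 1). split; [apply HA0pos|apply HdApos]; lra. apply Hbig; lra. }
  split; [exact Ha|]. split; [exact Hpos|]. split.
  - intros x Hx.
    assert (1 <= A 0 ^ 2 + dA 0 ^ 2) by (rewrite HA0, HdA0; lra).
    assert (A 0 ^ 2 + dA 0 ^ 2 <= A x ^ 2 + dA x ^ 2); [|lra].
    apply (mono (fun y => A y ^ 2 + dA y ^ 2)
             (fun y => 2 * A y * dA y * (1 - Kpar phi r eps y)) 0 x r); [lra| |].
    + intros y _. apply continuity_pt_plus; simpl; repeat apply continuity_pt_mult; auto;
        apply derivable_continuous_pt, derivable_pt_const.
    + intros y Hy Hyr. split.
      * eapply dl_eq. apply dadd; simpl; repeat apply dmul; try apply dconst; try apply HdA;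
          try apply Hdd; try exact Hyr. cbv beta. ring.
      * destruct (Hpos y ltac:(lra)). pose proof (Kpar_le1 phi r eps y Hr).
        apply Rmult_le_pos; [|lra]. apply Rmult_le_pos; [|lra]. lra.
  - intros x y Hxy. apply (mono A dA x y 0); [lra|auto|].
    intros z Hz _. split; [apply HdA|]. destruct (Hpos z ltac:(lra)); lra.
Qed.

Lemma rho_facts phi r eps s A dA rho drho :
  (forall x, 0 <= phi x <= 1) -> (forall x, x <= 0 -> phi x = 0) ->
  (forall x, 1 <= x -> phi x = 1) ->
  0 < s -> s < 1/100 -> PI / 6 <= r -> r < 1 - 1/100 -> 0 <= eps -> eps < 1/100 ->
  is_A phi r eps A dA ->
  rho 0 = s -> drho 0 = 0 ->
  (forall t, derivable_pt_lim rho t (drho t) /\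
       derivable_pt_lim drho t (dA (rho t) / A (rho t) * (1 - (drho t) ^ 2))) ->
  (forall t, 0 <= t -> 0 < rho t /\ drho t ^ 2 <= 1) /\
  (forall t, 11/10 <= t -> r + eps < rho t /\ 1/2 <= drho t ^ 2).
Proof.
  intros Hr Hl Hrt Hs0 Hs1 Hr1 Hr2 He0 He1 HA Hrho0 Hv0 Hrho.
  pose proof PI2_3_2 as Hpi.
  destruct (A_facts phi r eps A dA Hr Hl Hrt ltac:(lra) He0 ltac:(lra) HA)
    as [Ha [Hpos [HG HAm]]].
  destruct HA as [HA0 [HdA0 [HdA [HdAc HddA]]]].
  assert (Hrc : forall t, continuity_pt rho t) by (intro t; eapply dcont; apply Hrho).
  assert (Hvc : forall t, continuity_pt drho t) by (intro t; eapply dcont; apply Hrho).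
  assert (HAc : forall x, continuity_pt A x) by (intro x; eapply dcont; apply HdA).
  assert (HAs : A s = sin s) by (apply Ha; lra).
  assert (Hss : 0 < sin s) by (apply sin_gt_0; lra).
  assert (Hss2 : sin s < s) by (apply sin_lt_x; lra).
  set (g := fun t => dA (rho t) / A (rho t) * (1 - (drho t) ^ 2)).
  set (C := fun t => A (rho t) * A (rho t) * (1 - drho t * drho t)).
  assert (HCd : forall t, derivable_pt_lim C t 0).
  { intro t. destruct (Hrho t) as [H1 H2].
    assert (HAr : derivable_pt_lim (fun y => A (rho y)) t (dA (rho t) * drho t)).
    { eapply dl_eq. apply (dcomp A rho). exact H1. apply HdA. ring. }
    unfold C. eapply dl_eq. apply dmul. apply dmul; exact HAr.
    apply dsub. apply dconst. apply dmul; exact H2.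
    cbv beta. destruct (Req_dec (A (rho t)) 0) as [Hz|Hz].
    - rewrite Hz. unfold Rdiv. rewrite Rinv_0. ring.
    - field. exact Hz. }
  assert (HC : forall t, 0 <= t -> C t = sin s * sin s).
  { intros t Ht.
    assert (HC0 : C 0 = sin s * sin s) by (unfold C; rewrite Hrho0, Hv0, HAs; ring).
    assert (C 0 <= C t).
    { apply (mono C (fun _ => 0) 0 t 0); [lra| intros; eapply dcont; apply HCd|].
      intros; split; [apply HCd|lra]. }
    assert (- C 0 <= - C t).
    { apply (mono (fun y => - C y) (fun _ => - 0) 0 t 0); [lra| intros; apply continuity_pt_opp; eapply dcont; apply HCd|].
      intros; split; [apply dopp, HCd|lra]. }
    lra. }
  assert (HCne : forall t, 0 <= t -> A (rho t) <> 0).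
  { intros t Ht Hz. pose proof (HC t Ht) as H. unfold C in H. rewrite Hz in H.
    assert (0 < sin s * sin s) by (apply Rmult_lt_0_compat; lra). lra. }
  assert (Hrpos : forall t, 0 <= t -> 0 < rho t).
  { intros t Ht. destruct (Rlt_or_le 0 (rho t)) as [|Hn]; [assumption|exfalso].
    destruct (Req_dec (rho t) 0) as [Hz|Hz].
    - apply (HCne t Ht). rewrite Hz. exact HA0.
    - assert (Ht0 : 0 < t) by (destruct (Req_dec t 0) as [->|]; lra).
      destruct (IVT (fun x => - rho x) 0 t ltac:(intro x; apply continuity_pt_opp; auto)
                  Ht0 ltac:(lra) ltac:(lra)) as [z [Hz1 Hz2]].
      apply (HCne z ltac:(lra)). replace (rho z) with 0 by lra. exact HA0. }
  assert (Hv2 : forall t, 0 <= t -> 1 - drho t ^ 2 = sin s * sin s / (A (rho t) * A (rho t))).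
  { intros t Ht. pose proof (HC t Ht) as H. unfold C in H. rewrite <- H.
    field. apply (HCne t Ht). }
  assert (Hv2b : forall t, 0 <= t -> 0 < 1 - drho t ^ 2).
  { intros t Ht. rewrite (Hv2 t Ht). destruct (Hpos (rho t) (Hrpos t Ht)).
    apply Rdiv_lt_0_compat; apply Rmult_lt_0_compat; lra. }
  assert (Hvmono : forall a b, 0 <= a <= b -> drho a <= drho b).
  { intros a b Hab. apply (mono drho g a b 0); [lra|auto|].
    intros x Hx _. split; [apply Hrho|].
    unfold g. destruct (Hpos (rho x) (Hrpos x ltac:(lra))). pose proof (Hv2b x ltac:(lra)).
    apply Rmult_le_pos; [|lra]. unfold Rdiv. apply Rmult_le_pos; [lra|].
    left; apply Rinv_0_lt_compat; lra. }
  assert (Hvpos : forall t, 0 <= t -> 0 <= drho t).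
  { intros t Ht. rewrite <- Hv0. apply Hvmono. lra. }
  assert (Hrmono : forall a b, 0 <= a <= b -> rho a <= rho b).
  { intros a b Hab. apply (mono rho drho a b 0); [lra|auto|].
    intros x Hx _. split; [apply Hrho|apply Hvpos; lra]. }
  assert (Hr1' : r <= rho 1).
  { destruct (Rle_or_lt r (rho 1)) as [|Hlt]; [assumption|exfalso].
    assert (Hbel : forall t, 0 <= t <= 1 -> 0 < rho t < r).
    { intros t Ht. split. apply Hrpos; lra. pose proof (Hrmono t 1 ltac:(lra)). lra. }
    set (E := fun t => (cos (rho t) - cos s * cos t) * (cos (rho t) - cos s * cos t)
       + (- sin (rho t) * drho t + cos s * sin t) * (- sin (rho t) * drho t + cos s * sin t)).
    assert (HEd : forall t, 0 < t < 1 -> derivable_pt_lim E t 0).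
    { intros t Ht. destruct (Hrho t) as [H1 H2]. destruct (Hbel t ltac:(lra)) as [Hb1 Hb2].
      destruct (Ha (rho t) ltac:(lra)) as [Ha1 Ha2].
      assert (Hsn : 0 < sin (rho t)) by (apply sin_gt_0; lra).
      assert (Hc : derivable_pt_lim (fun y => cos (rho y)) t (- sin (rho t) * drho t)).
      { eapply dl_eq. apply (dcomp cos rho). exact H1. apply derivable_pt_lim_cos. ring. }
      assert (Hsd : derivable_pt_lim (fun y => sin (rho y)) t (cos (rho t) * drho t)).
      { eapply dl_eq. apply (dcomp sin rho). exact H1. apply derivable_pt_lim_sin. ring. }
      unfold E. eapply dl_eq.
      apply dadd; apply dmul; try apply dsub; try apply dadd; try apply dmul;
        try apply dopp; try exact Hc; try exact Hsd; try exact H1; try exact H2;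
        try apply dconst; try apply derivable_pt_lim_cos; try apply derivable_pt_lim_sin.
      cbv beta. rewrite Ha1, Ha2. field. lra. }
    assert (HEc : forall t, continuity_pt E t).
    { intro t. unfold E. repeat first [apply continuity_pt_plus | apply continuity_pt_mult
        | apply continuity_pt_minus | apply continuity_pt_opp].
      all: try apply (continuity_pt_comp rho cos); try apply (continuity_pt_comp rho sin); auto;
        apply derivable_continuous_pt; first [apply derivable_pt_cos | apply derivable_pt_sin
          | apply derivable_pt_const]. }
    assert (HE0 : E 0 = 0) by (unfold E; rewrite Hrho0, Hv0, cos_0, sin_0; ring).
    assert (E 0 <= E 1).
    { apply (mono E (fun _ => 0) 0 1 0); [lra| auto|]. intros; split; [apply HEd; lra|lra]. }
    assert (- E 0 <= - E 1).
    { apply (mono (fun y => - E y) (fun _ => - 0) 0 1 0); [lra| intros; apply continuity_pt_opp; auto|].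
      intros; split; [apply dopp, HEd; lra|lra]. }
    assert (HE1 : E 1 = 0) by lra.
    unfold E in HE1.
    pose proof (Rle_0_sqr (cos (rho 1) - cos s * cos 1)).
    pose proof (Rle_0_sqr (- sin (rho 1) * drho 1 + cos s * sin 1)). unfold Rsqr in *.
    assert (Hq : (cos (rho 1) - cos s * cos 1) * (cos (rho 1) - cos s * cos 1) = 0) by lra.
    apply Rmult_integral in Hq.
    destruct (Hbel 1 ltac:(lra)).
    assert (cos r < cos (rho 1)) by (apply cos_decreasing_1; lra).
    assert (cos 1 < cos r) by (apply cos_decreasing_1; lra).
    assert (0 < cos 1) by (apply cos_gt_0; lra).
    pose proof (COS_bound s).
    assert (cos s * cos 1 <= cos 1) by nra.
    lra. }
  assert (Hsr : 1/2 <= sin r).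
  { rewrite <- sin_PI6. apply sin_incr_1; lra. }
  assert (Hfast : forall t, 1 <= t -> 1/2 <= drho t ^ 2 /\ 9/10 <= drho t).
  { intros t Ht.
    assert (HAr : 1/2 <= A (rho t)).
    { apply Rle_trans with (A r). destruct (Ha r ltac:(lra)) as [-> _]; lra.
      apply HAm. pose proof (Hrmono 1 t ltac:(lra)). lra. }
    pose proof (Hv2 t ltac:(lra)) as Hv.
    assert (Hq : sin s * sin s / (A (rho t) * A (rho t)) <= 4 * (sin s * sin s)).
    { apply Rmult_le_reg_r with (A (rho t) * A (rho t)). nra.
      unfold Rdiv. rewrite Rmult_assoc, Rinv_l by nra. assert (1/4 <= A (rho t) * A (rho t)) by nra. pose proof (Rle_0_sqr (sin s)). unfold Rsqr in *. nra. }
    assert (sin s * sin s < 1/10000) by nra.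
    pose proof (Hvpos t ltac:(lra)).
    split. lra. nra. }
  split.
  - intros t Ht. split. apply Hrpos; lra. pose proof (Hv2b t Ht). lra.
  - intros t Ht. split; [|apply Hfast; lra].
    assert (rho 1 - 9/10 * 1 <= rho t - 9/10 * t); [|lra].
    apply (mono (fun y => rho y - 9/10 * y) (fun y => drho y - 9/10) 1 t 0); [lra| |].
    + intros; apply continuity_pt_minus; auto. apply continuity_pt_mult.
      apply derivable_continuous_pt, derivable_pt_const. apply derivable_continuous_pt, derivable_pt_id.
    + intros y Hy _. split.
      * eapply dl_eq. apply dsub. apply Hrho. apply (dmul (fun _ => 9/10) (fun y => y)); [apply dconst|apply did].
        cbv beta; ring.
      * pose proof (Hfast y ltac:(lra)). lra.
Qed.

Lemma PI_ub : PI / 4 <= 13/15.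
Proof. pose proof (PI_ineq 1) as [_ H]. simpl in H. unfold tg_alt, PI_tg in H. simpl in H. lra. Qed.

Lemma Kperp_le1 A dA x : 0 < A x -> 1 <= A x ^ 2 + dA x ^ 2 -> Kperp A dA x <= 1.
Proof. intros H1 H2. unfold Kperp. apply Rmult_le_reg_r with (A x ^ 2). nra.
  unfold Rdiv. rewrite Rmult_assoc, Rinv_l by nra. lra. Qed.

Theorem lemma3p16 (phi : R -> R)
  (Hsmooth : smooth phi)
  (Hrange : forall x, 0 <= phi x <= 1)
  (Hleft : forall x, x <= 0 -> phi x = 0)
  (Hright : forall x, 1 <= x -> phi x = 1) :
  exists delta, 0 < delta /\
    forall s r eps, 0 <= s -> 0 <= eps ->
      s < delta -> Rabs (r - PI / 4) < delta -> eps < delta ->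
      forall (A dA rho drho Ypar dYpar Yperp dYperp : R -> R),
        is_A phi r eps A dA ->
        is_rho A dA s rho drho ->
        is_stable eps r s (fun t => Kpar phi r eps (rho t)) Ypar dYpar ->
        is_stable eps r s (Kmu phi r eps A dA rho drho) Yperp dYperp ->
        forall t, 0 <= t ->
          0 < Wnorm Ypar t /\ 0 < Wnorm Yperp t.
Proof.
  exists (1/100). split; [lra|].
  intros s r eps Hs He Hsd Hr Hed A dA rho drho Ypar dYpar Yperp dYperp HA Hrho Hpar Hperp t Ht.
  apply Rabs_def2 in Hr.
  pose proof PI_ub. pose proof PI2_3_2. pose proof PI_RGT_0.
  set (T := 11/10).
  assert (HT : 0 < T < PI / 2) by (unfold T; lra).
  assert (Hsturm : forall K Y dY, is_stable eps r s K Y dY ->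
            (forall t, 0 < t < T -> K t <= 1) -> (forall t, T <= t -> K t <= 0) ->
            forall t, 0 <= t -> 0 < Wnorm Y t).
  { intros K Y dY [S1 [S2 [S3 [S4 S5]]]] HK1 HK0 t0 Ht0. unfold Wnorm.
    assert (Hp : forall t, 0 <= t -> 0 < Y t).
    { apply (sturm K Y dY (ell r s) T HT S1 S2 S3); [|exact S5|exact HK1|exact HK0].
      intros t1 Ht1 Hne. apply S4; [exact Ht1|right; exact Hne]. }
    apply Rdiv_lt_0_compat; apply Hp; lra. }
  assert (HKpar1 : forall x, Kpar phi r eps x <= 1) by (intro; apply Kpar_le1; exact Hrange).
  assert (HKparm : forall x, r + eps < x -> Kpar phi r eps x = -1)
    by (intros; apply Kpar_m1; assumption).
  destruct Hrho as [Hrho0 Hrhop].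
  destruct (Req_dec s 0) as [Hs0|Hs0].
  - specialize (Hrho0 Hs0).
    split.
    + apply (Hsturm _ _ _ Hpar); [intros; apply HKpar1| |exact Ht].
      intros t1 Ht1. destruct (Hrho0 t1) as [-> _]. rewrite HKparm; unfold T in *; lra.
    + apply (Hsturm _ _ _ Hperp); [| |exact Ht].
      * intros t1 _. unfold Kmu. destruct (Hrho0 t1) as [-> ->].
        pose proof (HKpar1 t1). lra.
      * intros t1 Ht1. unfold Kmu. destruct (Hrho0 t1) as [-> ->].
        rewrite HKparm; unfold T in *; lra.
  - assert (Hsp : 0 < s) by lra.
    destruct (Hrhop Hsp) as [Hr0 [Hv0 Hrd]].
    destruct (rho_facts phi r eps s A dA rho drho Hrange Hleft Hright Hsp Hsd
                ltac:(lra) ltac:(lra) He Hed HA Hr0 Hv0 Hrd) as [F1 F2].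
    destruct (A_facts phi r eps A dA Hrange Hleft Hright ltac:(lra) He ltac:(lra) HA)
      as [_ [Hpos [HG _]]].
    assert (HKp : forall t, 0 <= t -> Kperp A dA (rho t) <= 1).
    { intros t1 Ht1. destruct (F1 t1 Ht1) as [Hr1 _]. apply Kperp_le1.
      apply Hpos; lra. apply HG; lra. }
    split.
    + apply (Hsturm _ _ _ Hpar); [intros; apply HKpar1| |exact Ht].
      intros t1 Ht1. destruct (F2 t1 Ht1) as [Hr1 _]. rewrite HKparm; lra.
    + apply (Hsturm _ _ _ Hperp); [| |exact Ht].
      * intros t1 Ht1. unfold Kmu. destruct (F1 t1 ltac:(lra)) as [_ Hv].
        pose proof (HKp t1 ltac:(lra)). pose proof (HKpar1 (rho t1)).
        assert (0 <= drho t1 ^ 2) by (apply pow2_ge_0). nra.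
      * intros t1 Ht1. unfold Kmu. destruct (F1 t1 ltac:(unfold T in *; lra)) as [_ Hv].
        destruct (F2 t1 Ht1) as [Hr1 Hv2]. rewrite HKparm by lra.
        pose proof (HKp t1 ltac:(unfold T in *; lra)). nra.
Qed.
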